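(* Let $p$ be a positive integer. If problem (BM) has a spurious 2-critical point, then $C\in \mathbb{S}^n_{n-p}+\mathcal{L}$ (Minkowski sum), where $\mathbb{S}^n_{n-p}=\{X\in\mathbb{S}^n:\operatorname{rank}X\le n-p\}$ and $\mathcal{L}=\bigcup_I \operatorname{span}\{A_i : i\in I\}$, the union being over all subsets $I\subseteq[m]$ of constraints that can be simultaneously active, i.e. such that some $X\in\mathscr{X}$ satisfies $A_i\bullet X=b_i$ for all $i\in I$.
   Context: Let $\mathbb{S}^n$ be the space of real symmetric $n\times n$ matrices, with inner product $A\bullet B=\operatorname{trace}(A^TB)$ (also used for $A\in\mathbb{S}^n$, $B\in\mathbb{R}^{n\times n}$), and $\mathbb{S}^n_+$ the cone of positive semidefinite matrices. Let $m=m_1+m_2$, let $C,A_1,\dots,A_m\in\mathbb{S}^n$, $b\in\mathbb{R}^m$, $\mathcal{A}^*(\lambda)=\sum_i\lambda_iA_i$. Let $\mathscr{X}=\{X\in\mathbb{S}^n_+ : A_i\bullet X=b_i \ (i\le m_1),\ A_i\bullet X\ge b_i\ (m_1<i\le m)\}$; assume $\mathscr{X}$ is nonempty and that $\min_{X\in\mathscr{X}} C\bullet X$ is attained. Problem (BM) is $\min_{Y\in\mathbb{R}^{n\times p}} C\bullet YY^T$ subject to $YY^T\in\mathscr{X}$. For $Y$, let $I(Y)=\{i: A_i\bullet YY^T=b_i\}$ and $S(\lambda)=C-\mathcal{A}^*(\lambda)$. A point $Y$ is 1-critical for (BM) if $YY^T\in\mathscr{X}$ and there is $\lambda\in\mathbb{R}^{m_1}\times\mathbb{R}^{m_2}_+$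 with $\lambda_i=0$ for $i\notin I(Y)$ and $S(\lambda)Y=0$; it is 2-critical if moreover (for such a $\lambda$) $S(\lambda)\bullet UU^T\ge 0$ for all $U\in\mathbb{R}^{n\times p}$ with $A_i\bullet UY^T=0$ for all $i\in I(Y)$. A critical point is spurious if it is not a global minimizer of (BM). *)

(* Defs.v *)
From HB Require Import structures.
From mathcomp Require Import all_boot all_order all_algebra.
From mathcomp Require Import reals.
Set Implicit Arguments. Unset Strict Implicit. Unset Printing Implicit Defensive.
Import Order.TTheory GRing.Theory Num.Theory.
Local Open Scope ring_scope.

Section BM.
Variable R : realType.

Definition symmx (n : nat) (X : 'M[R]_n) : Prop := X^T = X.

Definition psdmx (n : nat) (X : 'M[R]_n) : Prop :=
  symmx X /\ forall x : 'cV[R]_n, 0 <= (x^T *m X *m x) 0 0.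

Definition inprod (k l : nat) (A B : 'M[R]_(k, l)) : R := \tr (A^T *m B).

(* feasible set \mathscr{X}: constraints indexed by 'I_(m1 + m2);
   i < m1 are equalities, the others are >= inequalities *)
Definition feasible (n m1 m2 : nat) (A : 'I_(m1 + m2) -> 'M[R]_n)
  (b : 'I_(m1 + m2) -> R) (X : 'M[R]_n) : Prop :=
  psdmx X /\
  forall i : 'I_(m1 + m2),
    if (i < m1)%N then inprod (A i) X = b i else b i <= inprod (A i) X.

Definition active (n p m1 m2 : nat) (A : 'I_(m1 + m2) -> 'M[R]_n)
  (b : 'I_(m1 + m2) -> R) (Y : 'M[R]_(n, p)) (i : 'I_(m1 + m2)) : Prop :=
  inprod (A i) (Y *m Y^T) = b i.

Definition Smat (n m1 m2 : nat) (C : 'M[R]_n) (A : 'I_(m1 + m2) -> 'M[R]_n)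
  (lam : 'I_(m1 + m2) -> R) : 'M[R]_n :=
  C - \sum_(i < m1 + m2) lam i *: A i.

Definition first_order_mult (n p m1 m2 : nat) (C : 'M[R]_n)
  (A : 'I_(m1 + m2) -> 'M[R]_n) (b : 'I_(m1 + m2) -> R) (Y : 'M[R]_(n, p))
  (lam : 'I_(m1 + m2) -> R) : Prop :=
  (forall i : 'I_(m1 + m2), (m1 <= i)%N -> 0 <= lam i) /\
  (forall i : 'I_(m1 + m2), ~ active A b Y i -> lam i = 0) /\
  Smat C A lam *m Y = 0.

Definition one_critical (n p m1 m2 : nat) (C : 'M[R]_n)
  (A : 'I_(m1 + m2) -> 'M[R]_n) (b : 'I_(m1 + m2) -> R) (Y : 'M[R]_(n, p)) : Prop :=
  feasible A b (Y *m Y^T) /\ exists lam, first_order_mult C A b Y lam.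

Definition two_critical (n p m1 m2 : nat) (C : 'M[R]_n)
  (A : 'I_(m1 + m2) -> 'M[R]_n) (b : 'I_(m1 + m2) -> R) (Y : 'M[R]_(n, p)) : Prop :=
  feasible A b (Y *m Y^T) /\
  exists lam, first_order_mult C A b Y lam /\
    forall U : 'M[R]_(n, p),
      (forall i, active A b Y i -> inprod (A i) (U *m Y^T) = 0) ->
      0 <= inprod (Smat C A lam) (U *m U^T).

Definition BM_global_min (n p m1 m2 : nat) (C : 'M[R]_n)
  (A : 'I_(m1 + m2) -> 'M[R]_n) (b : 'I_(m1 + m2) -> R) (Y : 'M[R]_(n, p)) : Prop :=
  feasible A b (Y *m Y^T) /\
  forall Y' : 'M[R]_(n, p), feasible A b (Y' *m Y'^T) ->
    inprod C (Y *m Y^T) <= inprod C (Y' *m Y'^T).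

Definition spurious_two_critical (n p m1 m2 : nat) (C : 'M[R]_n)
  (A : 'I_(m1 + m2) -> 'M[R]_n) (b : 'I_(m1 + m2) -> R) (Y : 'M[R]_(n, p)) : Prop :=
  two_critical C A b Y /\ ~ BM_global_min C A b Y.

Definition low_rank_sym (n p : nat) (X : 'M[R]_n) : Prop :=
  symmx X /\ (\rank X + p <= n)%N.

Definition simult_active (n m1 m2 : nat) (A : 'I_(m1 + m2) -> 'M[R]_n)
  (b : 'I_(m1 + m2) -> R) (I : {set 'I_(m1 + m2)}) : Prop :=
  exists X, feasible A b X /\ forall i, i \in I -> inprod (A i) X = b i.

Definition in_Lset (n m1 m2 : nat) (A : 'I_(m1 + m2) -> 'M[R]_n)
  (b : 'I_(m1 + m2) -> R) (L : 'M[R]_n) : Prop :=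
  exists I : {set 'I_(m1 + m2)}, simult_active A b I /\
    exists mu : 'I_(m1 + m2) -> R, L = \sum_(i in I) mu i *: A i.

End BM.

(* Main.v *)
Require Import Defs.
From HB Require Import structures.
From mathcomp Require Import all_boot all_order all_algebra.
From mathcomp Require Import reals.
From mathcomp Require Import zify.
Set Implicit Arguments. Unset Strict Implicit.
Import Order.TTheory GRing.Theory Num.Theory.
Local Open Scope ring_scope.

Section H.
Variable R : realType.

Lemma inprodD k l (A B X : 'M[R]_(k,l)) : inprod (A + B) X = inprod A X + inprod B X.
Proof. by rewrite /inprod linearD /= mulmxDl mxtraceD. Qed.

Lemma inprodZ k l a (A X : 'M[R]_(k,l)) : inprod (a *: A) X = a * inprod A X.
Proof. by rewrite /inprod linearZ /= -scalemxAl mxtraceZ. Qed.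

Lemma inprod0 k l (A : 'M[R]_(k,l)) : inprod A 0 = 0.
Proof. by rewrite /inprod mulmx0 mxtrace0. Qed.

Lemma inprodN k l (A X : 'M[R]_(k,l)) : inprod (- A) X = - inprod A X.
Proof. by rewrite -scaleN1r inprodZ mulN1r. Qed.

Lemma inprod_sum k l (I : finType) (P : pred I) (F : I -> 'M[R]_(k,l)) X :
  inprod (\sum_(i | P i) F i) X = \sum_(i | P i) inprod (F i) X.
Proof.
apply: (big_morph (fun A => inprod A X)); last by rewrite /inprod linear0 mul0mx mxtrace0.
by move=> A B; rewrite inprodD.
Qed.

Lemma trace11 (M : 'M[R]_1) : \tr M = M 0 0.
Proof. by rewrite /mxtrace big_ord1. Qed.

Lemma quad_uu n (S : 'M[R]_n) (u : 'cV[R]_n) :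
  inprod S (u *m u^T) = (u^T *m S^T *m u) 0 0.
Proof. by rewrite /inprod mulmxA mxtrace_mulC mulmxA trace11. Qed.

Lemma diag_entry n p (M : 'M[R]_(n,p)) (S : 'M[R]_n) j :
  (M^T *m S *m M) j j = ((col j M)^T *m S *m col j M) 0 0.
Proof.
rewrite -!mulmxA !mxE; apply: eq_bigr => k _; rewrite !mxE; congr (_ * _).
by apply: eq_bigr => l _; rewrite !mxE.
Qed.

 Lemma inprod_trace n p (S : 'M[R]_n) (M : 'M[R]_(n,p)) :
  inprod S (M *m M^T) = \sum_j inprod S (col j M *m (col j M)^T).
Proof.
under eq_bigr do rewrite quad_uu -diag_entry.
by rewrite /inprod mulmxA mxtrace_mulC mulmxA.
Qed.
Lemma inprodZr k l a (A X : 'M[R]_(k,l)) : inprod A (a *: X) = a * inprod A X.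
Proof. by rewrite /inprod -scalemxAr mxtraceZ. Qed.
End H.

Theorem theorem3 (R : realType) (n p m1 m2 : nat) (C : 'M[R]_n)
  (A : 'I_(m1 + m2) -> 'M[R]_n) (b : 'I_(m1 + m2) -> R) :
  (0 < p)%N ->
  symmx C ->
  (forall i, symmx (A i)) ->
  (exists X, feasible A b X) ->
  (exists X0, feasible A b X0 /\
     forall X, feasible A b X -> inprod C X0 <= inprod C X) ->
  (exists Y : 'M[R]_(n, p), spurious_two_critical C A b Y) ->
  exists X L : 'M[R]_n, low_rank_sym p X /\ in_Lset A b L /\ C = X + L.
Proof.
move=> hp hC hA _ _ [Y [[feasY [lam [[lampos [lamact SY]] crit]]] notmin]].
set S := Smat C A lam in SY crit *.
have Ssym : S^T = S.
  rewrite /S /Smat linearB /= hC linear_sum /=; congr (_ - _).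
  by apply: eq_bigr => i _; rewrite linearZ /= hA.
pose I := [set i | inprod (A i) (Y *m Y^T) == b i].
have Lsum : \sum_i lam i *: A i = \sum_(i in I) lam i *: A i.
  rewrite [RHS]big_mkcond /=; apply: eq_bigr => i _; rewrite inE.
  by case: eqP => // h; rewrite lamact ?scale0r.
have decomp : C = S + \sum_i lam i *: A i by rewrite /S /Smat subrK.
clearbody S.
have [hr|hr] : (\rank Y = p) \/ (\rank Y < p)%N.
  by move: (rank_leq_col Y); rewrite leq_eqVlt => /orP [/eqP|] ->; auto.
- exists S, (\sum_(i in I) lam i *: A i); split; [split=> // | split].
  + have hk : (Y^T <= kermx S^T)%MS.
      by apply/sub_kermxP; rewrite -trmx_mul SY trmx0.
    have := mxrankS hk; rewrite mxrank_ker !mxrank_tr hr => h.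
    have := rank_leq_row S; lia.
  + exists I; split; last by exists lam.
    by exists (Y *m Y^T); split=> // i; rewrite inE => /eqP.
  + by rewrite {1}decomp; congr (_ + _); exact: Lsum.
- exfalso; apply: notmin; split=> // Y' feasY'.
  pose K := kermx Y^T.
  have [i hi] : exists i, row i K != 0.
    case: (pickP (fun i => row i K != 0)) => [i hi | h]; first by exists i.
    have K0 : K = 0.
      by apply/row_matrixP => i; move/negbFE: (h i) => /eqP ->; rewrite row0.
    have := mxrank_ker Y^T; rewrite -/K K0 mxrank0 mxrank_tr; lia.
  set w := row i K in hi.
  have hw : w *m Y^T = 0 by apply/sub_kermxP; exact: row_sub.
  pose c := (w *m w^T) 0 0.
  have cE : c = \sum_k w 0 k ^+ 2.
    by rewrite /c mxE; apply: eq_bigr => k _; rewrite [w^T k 0]mxE expr2.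
  have cpos : 0 < c.
    rewrite lt0r cE sumr_ge0 ?andbT => [|k _]; last exact: sqr_ge0.
    apply/negP => /eqP h0; move/negP: hi; apply.
    apply/eqP/rowP => k; rewrite [RHS]mxE; apply/eqP; rewrite -sqrf_eq0; apply/eqP.
    by apply: (psumr_eq0P _ h0) => // l _; exact: sqr_ge0.
  have psd : forall u : 'cV[R]_n, 0 <= inprod S (u *m u^T).
    move=> u; have := crit (u *m w).
    have -> : u *m w *m (u *m w)^T = c *: (u *m u^T).
      rewrite trmx_mul mulmxA -(mulmxA u) [w *m w^T]mx11_scalar mul_mx_scalar.
      by rewrite -scalemxAl.
    rewrite inprodZr pmulr_rge0 //; apply=> j _.
    by rewrite -mulmxA hw mulmx0 inprod0.
  have S'ge : 0 <= inprod S (Y' *m Y'^T).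
    by rewrite inprod_trace; apply: sumr_ge0 => j _; apply: psd.
  have SY0 : inprod S (Y *m Y^T) = 0.
    by rewrite /inprod Ssym mulmxA SY mul0mx mxtrace0.
  rewrite decomp !inprodD !inprod_sum SY0 add0r.
  rewrite -[X in X <= _]add0r; apply: lerD => //.
  apply: ler_sum => j _; rewrite !inprodZ.
  have := feasY'.2 j; have := feasY.2 j.
  case: ifP => hj.
    by move=> -> ->.
  move=> _ hb; case: (eqVneq (inprod (A j) (Y *m Y^T)) (b j)) => [->|hn].
    by apply: ler_wpM2l => //; apply: lampos; rewrite leqNgt hj.
  by rewrite lamact ?mul0r ?mulr0 //; apply/eqP.
Qed.
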